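(* For every $m\geq 1$, $\mathrm{capt}(T_{m+1},m)=4m-2$.
   Context: The subdivided star $T_n$ is obtained from the star $K_{1,n}$ by adding $n$ new vertices and joining each new vertex to a distinct leaf of the star (so $T_n$ has $2n+1$ vertices and diameter $4$ for $n\geq 2$). All graphs are reflexive (a player may stay in place). The game of $k$ cops and $m$ robbers on $G$: in round 0 the cops first choose starting vertices, then the robbers choose theirs. In each round $i\geq 1$, all cops move (each to an adjacent vertex or staying), then all robbers move likewise. Several players may occupy the same vertex. Whenever a cop and some robbers occupy the same vertex, those robbers are captured and take no further part in the game. Both sides have full information. The cops win if all robbers are captured after finitely many rounds. For a cop-win graph $G$, $\mathrm{capt}(G,m)$ is the index of the round in which the last robber is captured when one cop plays to minimize this index and $m$ robbers play to maximize it. *)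

(* Defs.v *)
From mathcomp Require Import all_boot.
Set Implicit Arguments. Unset Strict Implicit. Unset Printing Implicit Defensive.

(* A graph is a finite vertex type V with an edge relation e.  All graphs are
   reflexive: a player may move along an edge or stay put. *)
Definition step (V : finType) (e : rel V) (u v : V) : Prop := u = v \/ e u v.

(* Robber configuration: robber i is at Some v, or None once captured. *)
Definition capture (V : finType) (m : nat) (c : V) (r : 'I_m -> option V)
  : 'I_m -> option V :=
  fun i => if r i == Some c then None else r i.

Definition all_captured (V : finType) (m : nat) (r : 'I_m -> option V) : Prop :=
  forall i, r i = None.

(* cop_forces e k c r : in a position at the end of a round (cop at c, live
   robbers at r, captures already performed), the cop can guarantee that all
   robbers are captured within at most k further rounds.  In a round the cop
   moves first (robbers on his new vertex are captured), then every remaining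
   robber moves (robbers moving onto the cop's vertex are captured). *)
Fixpoint cop_forces (V : finType) (e : rel V) (m : nat) (k : nat)
    (c : V) (r : 'I_m -> option V) : Prop :=
  match k with
  | 0 => all_captured r
  | k'.+1 =>
      all_captured r \/
      exists c' : V, step e c c' /\
        let r1 := capture c' r in
        forall mv : 'I_m -> V,
          (forall i, match r1 i with Some v => step e v (mv i) | None => True end) ->
          cop_forces e k' c'
            (capture c' (fun i => match r1 i with Some _ => Some (mv i) | None => None end))
  end.

(* One cop can guarantee that the last of the m robbers is captured in a round
   with index at most t (round 0: cop places, then robbers place). *)
Definition capt_le (V : finType) (e : rel V) (m t : nat) : Prop :=
  exists c0 : V, forall r0 : 'I_m -> V,
    cop_forces e t c0 (capture c0 (fun i => Some (r0 i))).

(* capt(G, m) = t : t is the least round index the cop can guarantee, i.e. the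
   min (over cop strategies) of the max (over robber strategies) of the index
   of the round in which the last robber is captured. *)
Definition is_capt (V : finType) (e : rel V) (m t : nat) : Prop :=
  capt_le e m t /\ forall t', capt_le e m t' -> t <= t'.

(* Vertices: None = centre; Some (i, false) = leaf i of K_{1,n};
   Some (i, true) = the new vertex attached to leaf i. *)
Definition Tvert (n : nat) : finType := option ('I_n * bool)%type.

Definition Tedge (n : nat) : rel (Tvert n) :=
  fun x y =>
    match x, y with
    | None, Some (_, false) => true
    | Some (_, false), None => true
    | Some (i, false), Some (j, true) => i == j
    | Some (i, true), Some (j, false) => i == j
    | _, _ => false
    end.

(* Main.v *)
Require Import Defs.
From mathcomp Require Import all_boot.
From mathcomp Require Import zify.
Set Implicit Arguments. Unset Strict Implicit. Unset Printing Implicit Defensive.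

Definition nextst {n m : nat} (c' : Tvert n) (r : 'I_m -> option (Tvert n)) (mv : 'I_m -> Tvert n)
  : 'I_m -> option (Tvert n) :=
  capture c' (fun i => match capture c' r i with Some _ => Some (mv i) | None => None end).

Definition validmv {n m : nat} (c' : Tvert n) (r : 'I_m -> option (Tvert n)) (mv : 'I_m -> Tvert n) : Prop :=
  forall i, match capture c' r i with Some v => step (@Tedge n) v (mv i) | None => True end.

Lemma cf_step {n m : nat} k (c c' : Tvert n) (r : 'I_m -> option (Tvert n)) : step (@Tedge n) c c' ->
  (forall mv, validmv c' r mv -> cop_forces (@Tedge n) k c' (nextst c' r mv)) ->
  cop_forces (@Tedge n) k.+1 c r.
Proof. by move=> hs H; right; exists c'; split. Qed.

Lemma cf_all {n m : nat} k (c : Tvert n) (r : 'I_m -> option (Tvert n)) :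
  all_captured r -> cop_forces (@Tedge n) k c r.
Proof. by case: k => [|k] h; [|left]. Qed.

Lemma capture_neq {n m : nat} (c : Tvert n) (r : 'I_m -> option (Tvert n)) i : capture c r i != Some c.
Proof. rewrite /capture. case: (r i =P Some c) => h. by []. by apply/eqP. Qed.

Definition live {n m : nat} (r : 'I_m -> option (Tvert n)) := [set i | r i != None].

Lemma live_next {n m : nat} (c' : Tvert n) (r : 'I_m -> option (Tvert n)) mv :
  live (nextst c' r mv) \subset live r.
Proof.
apply/subsetP => i; rewrite !inE /nextst /capture.
by case: (r i) => [v|] //=; case: ifP.
Qed.

Lemma round1 {n m : nat} (j : 'I_n) b (r : 'I_m -> option (Tvert n)) mv i0 :
  r i0 = Some (Some (j, b)) -> validmv (Some (j, false)) r mv ->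
  nextst (Some (j, false)) r mv i0 = None \/ nextst (Some (j, false)) r mv i0 = Some (Some (j, true)).
Proof.
move=> hr /(_ i0); rewrite /nextst /capture hr.
case: b hr => hr /=.
- have -> : (Some (Some (j, true)) == Some (Some (j, false))) = false.
    by apply/eqP => -[].
  case: (mv i0) => [[j' b']|] [h|h] //=.
  + case: h => <- <-. by right; rewrite ifF //; apply/eqP => -[].
  + case: b' h => //= /eqP <-. by left; rewrite eqxx.
- by rewrite eqxx /=; left.
Qed.

Lemma round2 {n m : nat} (j : 'I_n) (r : 'I_m -> option (Tvert n)) mv i0 :
  r i0 = None \/ r i0 = Some (Some (j, true)) ->
  nextst (Some (j, true)) r mv i0 = None.
Proof.
rewrite /nextst /capture => -[] ->; first by [].
by rewrite eqxx.
Qed.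

Lemma two_rounds {n m : nat} (j : 'I_n) b (r : 'I_m -> option (Tvert n)) i0 K :
  r i0 = Some (Some (j, b)) ->
  (forall r' : 'I_m -> option (Tvert n), live r' \subset live r :\ i0 ->
     cop_forces (@Tedge n) K (Some (j, true)) r') ->
  cop_forces (@Tedge n) K.+2 None r.
Proof.
move=> hr H.
apply: (@cf_step _ _ _ _ (Some (j, false))); first by right.
move=> mv1 hv1.
apply: (@cf_step _ _ _ _ (Some (j, true))); first by right => /=.
move=> mv2 hv2; apply: H.
apply/subsetP => i; rewrite !inE => hi.
have h1 := round1 hr hv1.
have h2 := round2 mv2 h1.
apply/andP; split.
  by apply: contraNneq hi => ->; rewrite h2.
have := subsetP (live_next (Some (j,false)) r mv1) i.
have := subsetP (live_next (Some (j,true)) (nextst (Some (j, false)) r mv1) mv2) i.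
rewrite !inE => ha hb; exact: hb (ha hi).
Qed.

Lemma back2 {n m : nat} (j : 'I_n) (r : 'I_m -> option (Tvert n)) K :
  (forall r' : 'I_m -> option (Tvert n), live r' \subset live r ->
     (forall i, r' i != Some None) -> cop_forces (@Tedge n) K None r') ->
  cop_forces (@Tedge n) K.+2 (Some (j, true)) r.
Proof.
move=> H.
apply: (@cf_step _ _ _ _ (Some (j, false))); first by right => /=.
move=> mv1 hv1.
apply: (@cf_step _ _ _ _ None); first by right.
move=> mv2 hv2; apply: H; last by move=> i; apply: capture_neq.
exact: subset_trans (live_next _ _ _) (live_next _ _ _).
Qed.

Lemma upper {n m : nat} k : 0 < k -> forall r : 'I_m -> option (Tvert n),
  (forall i, r i != Some None) -> #|live r| <= k ->
  cop_forces (@Tedge n) (4 * k - 2) None r.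
Proof.
elim: k => [//|k IH] _ r hr hl.
case: (pickP (fun i => r i != None)) => [i0 hi0|hnone]; last first.
  by apply: cf_all => i; apply/eqP; move: (hnone i) => /= /negbFE.
case E: (r i0) hi0 => [v|] // _.
case: v E => [[j b]|] E; last by move: (hr i0); rewrite E eqxx.
have hi0 : i0 \in live r by rewrite inE E.
have hcd : #|live r :\ i0| <= k.
  by move: hl; rewrite (cardsD1 i0 (live r)) hi0.
case: k IH hcd hl => [|k] IH hcd hl.
  apply: (two_rounds E) => r' hs; apply: cf_all => i; apply/eqP.
  apply/negPn/negP => hi.
  have := subsetP hs i; rewrite !inE hi => /(_ isT) /andP [hne hlive].
  move: hcd; rewrite leqn0 cards_eq0 => /eqP h.
  have : i \in live r :\ i0 by rewrite !inE hne.
  by rewrite h in_set0.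
have -> : 4 * k.+2 - 2 = (4 * k.+1 - 2).+4 by lia.
apply: (two_rounds E) => r' hs; apply: back2 => r'' hs' hr''.
apply: IH => //; apply: leq_trans hcd.
exact: subset_leq_card (subset_trans hs' hs).
Qed.

Definition Bset {n m : nat} (r : 'I_m -> option (Tvert n)) : {set 'I_n} :=
  [set j | [exists i, r i == Some (Some (j, true))]].

Definition cost {n : nat} (c : Tvert n) (B : {set 'I_n}) : nat :=
  if #|B| == 0 then 0 else
  match c with
  | None => 4 * #|B| - 2
  | Some (i, false) => if i \in B then 4 * #|B| - 3 else 4 * #|B| - 1
  | Some (i, true) => if i \in B then 4 * #|B| - 3 else 4 * #|B|
  end.

Definition stat {n m : nat} (c' : Tvert n) (r : 'I_m -> option (Tvert n)) (i : 'I_m) : Tvert n :=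
  match capture c' r i with Some v => v | None => c' end.

Lemma stat_valid {n m : nat} (c' : Tvert n) (r : 'I_m -> option (Tvert n)) :
  validmv c' r (stat c' r).
Proof. by move=> i; rewrite /stat; case: (capture c' r i) => // v; left. Qed.

Lemma next_stat {n m : nat} (c' : Tvert n) (r : 'I_m -> option (Tvert n)) i :
  nextst c' r (stat c' r) i = capture c' r i.
Proof.
rewrite /nextst /stat /capture.
case: (r i =P Some c') => [//|]; case: (r i) => [v|] h //=; rewrite ifF //; exact/eqP.
Qed.

Lemma Bset_next {n m : nat} (c' : Tvert n) (r : 'I_m -> option (Tvert n)) :
  Bset (nextst c' r (stat c' r)) = Bset r :\: [set j | c' == Some (j, true)].
Proof.
apply/setP => j; rewrite !inE.
apply/existsP/andP => [[i]|[hc /existsP [i hi]]].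
  rewrite next_stat /capture; case: (r i =P Some c') => // h1 h2.
  split; last by apply/existsP; exists i.
  by apply/eqP => hc; apply: h1; rewrite hc; apply/eqP.
exists i; rewrite next_stat /capture; case: (r i =P Some c') => // h.
by move: hi; rewrite h => /eqP [] hc'; rewrite hc' eqxx in hc.
Qed.

Lemma Bset_none {n m : nat} (r : 'I_m -> option (Tvert n)) :
  all_captured r -> #|Bset r| = 0.
Proof.
move=> h; apply/eqP; rewrite cards_eq0; apply/eqP/setP => j; rewrite !inE.
by apply/existsP => -[i]; rewrite h.
Qed.

Lemma cost0 {n : nat} (c : Tvert n) (B : {set 'I_n}) : #|B| = 0 -> cost c B = 0.
Proof. by rewrite /cost => ->. Qed.

Lemma setE0 {n : nat} (c : Tvert n) : (forall j, c != Some (j, true)) ->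
  [set j | c == Some (j, true)] = set0.
Proof. by move=> h; apply/setP => j; rewrite !inE (negbTE (h j)). Qed.

Lemma setE1 {n : nat} (j : 'I_n) : [set j' | Some (j, true) == Some (j', true)] = [set j].
Proof.
apply/setP => x; rewrite !inE; apply/eqP/eqP => [[->]|->] //.
Qed.

Ltac fin := repeat (first [case: eqP => ? | case: ifP => ?]); lia.

Lemma cost_step {n : nat} (c c' : Tvert n) (B : {set 'I_n}) :
  step (@Tedge n) c c' ->
  cost c B <= (cost c' (B :\: [set j | c' == Some (j, true)])).+1.
Proof.
case: c' => [[j [|]]|] hs.
- rewrite setE1.
  have hc := cardsD1 j B.
  have hjn : (j \in B :\ j) = false by rewrite !inE eqxx.
  case hjB : (j \in B) hc => hc; rewrite ?add1n ?add0n in hc.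
  + case: hs => [->|].
    * rewrite /cost hjB hjn hc. set x := #|B :\ j| in hc *. fin.
    * case: c => [[i [|]]|] //= /eqP ->.
      rewrite /cost hjB hjn hc. set x := #|B :\ j| in hc *. fin.
  + have -> : B :\ j = B.
      apply/setP => x; rewrite !inE; case: eqP => // ->; by rewrite hjB.
    case: hs => [->|]; first by [].
    case: c => [[i [|]]|] //= /eqP ->.
    rewrite /cost hjB. set x := #|B|. fin.
- rewrite setE0 ?setD0; last by move=> j'; apply/eqP => -[].
  case: hs => [->|]; first by [].
  case: c => [[i [|]]|] //=.
  + move=> /eqP ->. rewrite /cost. set x := #|B|. fin.
  + move=> _. rewrite /cost. set x := #|B|. fin.
- rewrite setE0 ?setD0; last by [].
  case: hs => [->|]; first by [].
  case: c => [[i [|]]|] //= _.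
  rewrite /cost. set x := #|B|. fin.
Qed.

Lemma lower {n m : nat} k (c : Tvert n) (r : 'I_m -> option (Tvert n)) :
  cop_forces (@Tedge n) k c r -> cost c (Bset r) <= k.
Proof.
elim: k c r => [|k IH] c r /=.
  by move=> h; rewrite cost0 // Bset_none.
case => [h|[c' [hs H]]]; first by rewrite cost0 // Bset_none.
have := IH c' (nextst c' r (stat c' r)) (H _ (stat_valid c' r)).
rewrite Bset_next => h.
exact: leq_trans (cost_step _ hs) _.
Qed.

Theorem mainTheorem10 (m : nat) :
  1 <= m -> is_capt (@Tedge m.+1) m (4 * m - 2).
Proof.
move=> hm; split.
  exists None => r0; apply: upper.
  - by [].
  - by move=> i; apply: capture_neq.
  - by rewrite -[m in _ <= m]card_ord; apply: max_card.
move=> t' [c0 H].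
pose j : 'I_m.+1 := match c0 with None => ord0 | Some (j, _) => j end.
have := lower (H (fun i => Some (lift j i, true))).
have hB : Bset (capture c0 (fun i : 'I_m => Some (Some (lift j i, true)))) = [set~ j].
  apply/setP => x; rewrite !inE.
  apply/existsP/idP => [[i]|hx].
    rewrite /capture; case: ifP => // _ /eqP [hx]; rewrite -hx.
    by rewrite eq_sym; exact: neq_lift.
  case: (unliftP j x) hx => [i ->|->]; last by rewrite eqxx.
  move=> _; exists i; rewrite /capture ifF //.
  apply/eqP => -[hc]; move: hc; rewrite /j.
  case: c0 {H j} => [[j' b]|] //= [] hl _.
  by move: (neq_lift j' i); rewrite hl eqxx.
rewrite hB /cost cardsC1 card_ord /=.
have -> : (m == 0) = false by apply/eqP; lia.
rewrite /j; case: c0 {H hB j} => [[j' [|]]|]; rewrite ?inE ?eqxx /=; lia.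
Qed.
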